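(* Every palindrome that is a factor of $\Lambda_\theta$ contains at most three distinct letters.
   Context: Fix an irrational $\theta$ with $1<\theta<2$. Let $S(\theta)=\{i+j\theta : i,j\in\mathbb{N}_0\}$ and let $s_0<s_1<s_2<\cdots$ be its elements in increasing order. Put $\delta(n)=s_{n+1}-s_n$. Let $\lambda$ be the map from the set of values $\{\delta(n):n\ge0\}$ to $\mathbb{N}_0$ that numbers the distinct values in order of first occurrence: $\lambda(\delta(0))=0$, and the $m$-th distinct value to appear in the sequence $\delta(0),\delta(1),\dots$ (counting from $m=0$) receives label $m$. The Lambda word is the right-infinite word $\Lambda_\theta=\lambda(\delta(0))\lambda(\delta(1))\lambda(\delta(2))\cdots$ over the alphabet $\mathbb{N}_0$. A factor is a finite block of consecutive letters; a palindrome is a finite word equal to its reversal. *)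

(* Defs.v *)
From Stdlib Require Import Reals List Arith.
Import ListNotations.
Open Scope R_scope.

Definition irrational (x : R) : Prop :=
  ~ exists (p q : Z), q <> 0%Z /\ x = IZR p / IZR q.

Definition inS (theta x : R) : Prop :=
  exists i j : nat, x = INR i + INR j * theta.

Definition is_S_enum (theta : R) (s : nat -> R) : Prop :=
  (forall n, s n < s (S n)) /\
  (forall n, inS theta (s n)) /\
  (forall x, inS theta x -> exists n, s n = x).

Definition delta (s : nat -> R) (n : nat) : R := s (S n) - s n.

Definition first_occ (d : nat -> R) (n : nat) : nat :=
  (fix go (k fuel : nat) : nat :=
     match fuel with
     | O => k
     | S f => if Req_EM_T (d k) (d n) then k else go (S k) f
     end) O n.

Definition is_newb (d : nat -> R) (m : nat) : bool :=
  Nat.eqb (first_occ d m) m.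

(* lambda labelling: label of d n = number of distinct values that
   occurred before the first occurrence of the value d n *)
Definition lam (d : nat -> R) (n : nat) : nat :=
  length (filter (is_newb d) (seq 0 (first_occ d n))).

Definition Lambda_word (s : nat -> R) (n : nat) : nat := lam (delta s) n.

Definition factor_palindrome (w : nat -> nat) (i L : nat) : Prop :=
  forall t, (t < L)%nat -> w (i + t)%nat = w (i + (L - 1 - t))%nat.

Definition factor_at_most_3_letters (w : nat -> nat) (i L : nat) : Prop :=
  exists a b c : nat, forall t, (t < L)%nat ->
    w (i + t)%nat = a \/ w (i + t)%nat = b \/ w (i + t)%nat = c.

(* Main.v *)
Require Import Defs.
From Stdlib Require Import Reals List Arith ZArith Lia Lra Psatz Classical ClassicalEpsilon.
Open Scope R_scope.

Definition V (th : R) (a b : Z) : R := IZR a + IZR b * th.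

Ltac vsimp := unfold V in *; repeat (rewrite ?plus_IZR, ?minus_IZR, ?opp_IZR, ?mult_IZR in * ).

Lemma core (th : R) (k p q k' I J ix jx iy jy : Z) :
  (p*q - k*k' = 1)%Z -> (0 <= k)%Z -> (0 <= k')%Z -> (0 <= p)%Z -> (0 <= q)%Z ->
  0 < IZR q * th - IZR k -> 0 < IZR p - IZR k' * th ->
  (k <= I)%Z -> (k' <= J)%Z -> (I < k + p \/ J < q + k')%Z ->
  (0 <= ix <= I)%Z -> (0 <= jx <= J)%Z -> (0 <= iy <= I)%Z -> (0 <= jy <= J)%Z ->
  V th ix jx < V th iy jy ->
  (forall zi zj, (0 <= zi)%Z -> (0 <= zj)%Z -> ~ (V th ix jx < V th zi zj < V th iy jy)) ->
  (forall zi zj, (0 <= zi)%Z -> (0 <= zj)%Z ->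
      ~ (V th (I-iy) (J-jy) < V th zi zj < V th (I-ix) (J-jx))) ->
  V th iy jy - V th ix jx = IZR q * th - IZR k \/
  V th iy jy - V th ix jx = IZR p - IZR k' * th \/
  V th iy jy - V th ix jx = (IZR q * th - IZR k) + (IZR p - IZR k' * th).
Proof.
  intros Hdet Hk Hk' Hp Hq HA HB HkI HkJ HC2 Hx1 Hx2 Hy1 Hy2 Hxy E1 E2.
  remember (IZR q * th - IZR k) as A eqn:HAe.
  remember (IZR p - IZR k' * th) as B eqn:HBe.
  set (P := (iy - ix)%Z). set (Q := (jy - jx)%Z).
  set (s := (P*k' + Q*p)%Z). set (t := (P*q + Q*k)%Z).
  assert (HP : (P = -s*k + t*p)%Z).
  { assert (E : (-s*k + t*p = P*(p*q - k*k'))%Z) by (unfold s, t; ring).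
    rewrite E, Hdet; ring. }
  assert (HQ : (Q = s*q - t*k')%Z).
  { assert (E : (s*q - t*k' = Q*(p*q - k*k'))%Z) by (unfold s, t; ring).
    rewrite E, Hdet; ring. }
  assert (Hiy : (iy = ix + P)%Z) by (unfold P; ring).
  assert (Hjy : (jy = jx + Q)%Z) by (unfold Q; ring).
  assert (Hv : V th iy jy - V th ix jx = IZR s * A + IZR t * B).
  { rewrite Hiy, Hjy, HP, HQ, HAe, HBe. vsimp. ring. }
  clearbody s t.
  assert (Hpos : 0 < IZR s * A + IZR t * B) by lra.
  assert (Hp1 : (1 <= p)%Z) by nia.
  assert (Hq1 : (1 <= q)%Z) by nia.
  destruct (Z_le_gt_dec s 0) as [Hs0|Hs0].
  - destruct (Z_le_gt_dec t 0) as [Ht0|Ht0].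
    + exfalso. apply IZR_le in Hs0. apply IZR_le in Ht0. nra.
    + destruct (Z.eq_dec s 0) as [Hs00|Hs00].
      *
        subst s. destruct (Z.eq_dec t 1) as [Ht1|Ht1].
        { right; left. rewrite Hv, Ht1. ring. }
        exfalso. apply (E1 (ix + p)%Z (jx - k')%Z); [lia| nia |].
        assert (Ht2 : (2 <= t)%Z) by lia. apply IZR_le in Ht2.
        split; vsimp; vsimp.
        -- nra.
        -- assert (IZR iy + IZR jy * th = IZR ix + IZR jx * th + IZR t * B) by lra.
           vsimp. nra.
      * exfalso. assert (Hs1 : (s <= -1)%Z) by lia.
        assert (Ht1 : (1 <= t)%Z) by lia. destruct HC2; nia.
  - destruct (Z_le_gt_dec t 0) as [Ht0|Ht0].
    + destruct (Z.eq_dec t 0) as [Ht00|Ht00].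
      * subst t. destruct (Z.eq_dec s 1) as [Hs1|Hs1].
        { left. rewrite Hv, Hs1. ring. }
        exfalso. apply (E1 (ix - k)%Z (jx + q)%Z); [nia| lia |].
        assert (Hs2 : (2 <= s)%Z) by lia. apply IZR_le in Hs2.
        split; vsimp; vsimp.
        -- nra.
        -- assert (IZR iy + IZR jy * th = IZR ix + IZR jx * th + IZR s * A) by lra.
           vsimp. nra.
      * exfalso. destruct HC2; nia.
    + destruct (Z.eq_dec s 1) as [Hs1|Hs1]; [destruct (Z.eq_dec t 1) as [Ht1|Ht1]|].
      * right; right. rewrite Hv, Hs1, Ht1. ring.
      * assert (Hbig : IZR s * A + IZR t * B > A + B).
        { assert (Ht2 : (2 <= t)%Z) by lia. apply IZR_le in Ht2.
          rewrite Hs1. nra. }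
        clear Hs1 Ht1.
        assert (Hz1 : (I - ix - p < 0)%Z).
        { destruct (Z_lt_le_dec (I - ix - p) 0) as [h|h]; [exact h|].
          exfalso. apply (E2 (I - ix - p)%Z (J - jx + k')%Z); [lia|lia|].
          split; vsimp; lra. }
        assert (Hz2 : (J - jx - q < 0)%Z).
        { destruct (Z_lt_le_dec (J - jx - q) 0) as [h|h]; [exact h|].
          exfalso. apply (E2 (I - ix + k)%Z (J - jx - q)%Z); [lia|lia|].
          split; vsimp; lra. }
        exfalso. apply (E1 (ix - k + p)%Z (jx + q - k')%Z); [lia|lia|].
        split; vsimp; lra.
      * assert (Hbig : IZR s * A + IZR t * B > A + B).
        { assert (Hs2 : (2 <= s)%Z) by lia. assert (Ht1 : (1 <= t)%Z) by lia.
          apply IZR_le in Hs2. apply IZR_le in Ht1. nra. }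
        assert (Hz1 : (I - ix - p < 0)%Z).
        { destruct (Z_lt_le_dec (I - ix - p) 0) as [h|h]; [exact h|].
          exfalso. apply (E2 (I - ix - p)%Z (J - jx + k')%Z); [lia|lia|].
          split; vsimp; lra. }
        assert (Hz2 : (J - jx - q < 0)%Z).
        { destruct (Z_lt_le_dec (J - jx - q) 0) as [h|h]; [exact h|].
          exfalso. apply (E2 (I - ix + k)%Z (J - jx - q)%Z); [lia|lia|].
          split; vsimp; lra. }
        exfalso. apply (E1 (ix - k + p)%Z (jx + q - k')%Z); [lia|lia|].
        split; vsimp; lra.
Qed.
Lemma irr_ne (th : R) (a b : Z) : irrational th -> (b <> 0)%Z -> IZR b * th <> IZR a.
Proof.
  intros Hirr Hb E. apply Hirr. exists a, b. split; [exact Hb|].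
  apply not_0_IZR in Hb. field_simplify_eq; [lra| exact Hb].
Qed.

Lemma sb_gen (th : R) (I J : Z) : irrational th -> forall n : nat,
  forall k p q k' : Z,
  (p*q - k*k' = 1)%Z -> (0 <= k)%Z -> (0 <= k')%Z -> (0 <= p)%Z -> (0 <= q)%Z ->
  0 < IZR q * th - IZR k -> 0 < IZR p - IZR k' * th ->
  (k <= I)%Z -> (k' <= J)%Z -> ((I - k) + (J - k') < Z.of_nat n)%Z ->
  exists k p q k' : Z,
  (p*q - k*k' = 1)%Z /\ (0 <= k)%Z /\ (0 <= k')%Z /\ (0 <= p)%Z /\ (0 <= q)%Z /\
  0 < IZR q * th - IZR k /\ 0 < IZR p - IZR k' * th /\
  (k <= I)%Z /\ (k' <= J)%Z /\ (I < k + p \/ J < q + k')%Z.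
Proof.
  intros Hirr n. induction n as [|n IH]; intros k p q k' Hdet Hk Hk' Hp Hq HA HB HkI HkJ Hm.
  - lia.
  - assert (Hp1 : (1 <= p)%Z) by nia.
    assert (Hq1 : (1 <= q)%Z) by nia.
    destruct (total_order_T (IZR q * th - IZR k) (IZR p - IZR k' * th)) as [[Hlt|Heq]|Hgt].
    + destruct (Z_le_gt_dec (q + k') J) as [Hle|Hgt2].
      * apply (IH k (p + k)%Z q (k' + q)%Z); try lia; try nia;
        rewrite ?plus_IZR; lra.
      * exists k, p, q, k'. repeat split; auto; lia.
    + exfalso. apply (irr_ne th (p + k) (q + k') Hirr); [lia|].
      rewrite !plus_IZR. lra.
    + destruct (Z_le_gt_dec (k + p) I) as [Hle|Hgt2].
      * apply (IH (k + p)%Z p (q + k')%Z k'); try lia; try nia;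
        rewrite ?plus_IZR; lra.
      * exists k, p, q, k'. repeat split; auto; lia.
Qed.

Lemma sb (th : R) (I J : Z) : irrational th -> 0 < th -> (0 <= I)%Z -> (0 <= J)%Z ->
  exists k p q k' : Z,
  (p*q - k*k' = 1)%Z /\ (0 <= k)%Z /\ (0 <= k')%Z /\ (0 <= p)%Z /\ (0 <= q)%Z /\
  0 < IZR q * th - IZR k /\ 0 < IZR p - IZR k' * th /\
  (k <= I)%Z /\ (k' <= J)%Z /\ (I < k + p \/ J < q + k')%Z.
Proof.
  intros Hirr Hth HI HJ.
  apply (sb_gen th I J Hirr (Z.to_nat (I + J + 1)) 0 1 1 0); try lia.
  - simpl. lra.
  - simpl. lra.
Qed.
Definition fgo (d : nat -> R) (n : nat) : nat -> nat -> nat :=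
  fix go (k fuel : nat) : nat :=
  match fuel with
  | O => k
  | S f => if Req_EM_T (d k) (d n) then k else go (S k) f
  end.

Lemma fgo_S d n k f : fgo d n k (S f) =
  if Req_EM_T (d k) (d n) then k else fgo d n (S k) f.
Proof. reflexivity. Qed.
Lemma fgo_O d n k : fgo d n k O = k.
Proof. reflexivity. Qed.

Lemma first_occ_fgo d n : first_occ d n = fgo d n 0 n.
Proof. reflexivity. Qed.

Lemma fgo_spec d n : forall fuel k,
  (k <= fgo d n k fuel <= k + fuel)%nat /\
  (forall m, (k <= m < fgo d n k fuel)%nat -> d m <> d n) /\
  ((fgo d n k fuel < k + fuel)%nat -> d (fgo d n k fuel) = d n).
Proof.
  induction fuel as [|f IH]; intros k; [rewrite fgo_O | rewrite fgo_S].
  - split; [lia|]. split; [intros; lia| intros; lia].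
  - destruct (Req_EM_T (d k) (d n)) as [E|E].
    + split; [lia|]. split; [intros; lia| intros; exact E].
    + destruct (IH (S k)) as [H1 [H2 H3]].
      split; [lia|]. split.
      * intros m Hm. destruct (Nat.eq_dec m k) as [->|Hne]; [exact E|]. apply H2; lia.
      * intros Hlt. apply H3; lia.
Qed.

Lemma fo_le d n : (first_occ d n <= n)%nat.
Proof. rewrite first_occ_fgo. destruct (fgo_spec d n n 0) as [H _]. lia. Qed.

Lemma fo_val d n : d (first_occ d n) = d n.
Proof.
  rewrite first_occ_fgo. destruct (fgo_spec d n n 0) as [H1 [_ H3]].
  destruct (Nat.eq_dec (fgo d n 0 n) n) as [E|E].
  - rewrite E. reflexivity.
  - apply H3. lia.
Qed.

Lemma fo_min d n m : (m < first_occ d n)%nat -> d m <> d n.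
Proof.
  rewrite first_occ_fgo. destruct (fgo_spec d n n 0) as [_ [H2 _]].
  intros. apply H2. lia.
Qed.

Lemma fo_eq d n m : d n = d m -> first_occ d n = first_occ d m.
Proof.
  intros E.
  destruct (lt_eq_lt_dec (first_occ d n) (first_occ d m)) as [[H|H]|H]; auto.
  - exfalso. apply (fo_min d m _ H). rewrite fo_val. exact E.
  - exfalso. apply (fo_min d n _ H). rewrite fo_val. auto.
Qed.

Lemma lam_eq d n m : d n = d m -> lam d n = lam d m.
Proof. intros E. unfold lam. rewrite (fo_eq d n m E). reflexivity. Qed.

Lemma newb_fo d n : is_newb d (first_occ d n) = true.
Proof.
  unfold is_newb. apply Nat.eqb_eq. apply fo_eq. apply fo_val.
Qed.

Lemma count_lt (P : nat -> bool) f1 f2 : (f1 < f2)%nat -> P f1 = true ->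
  (length (filter P (seq 0 f1)) < length (filter P (seq 0 f2)))%nat.
Proof.
  intros Hlt HP.
  replace f2 with (f1 + S (f2 - f1 - 1))%nat by lia.
  rewrite seq_app, filter_app, length_app. simpl. rewrite HP. simpl. lia.
Qed.

Lemma lam_inj d n m : lam d n = lam d m -> d n = d m.
Proof.
  intros H. destruct (Req_EM_T (d n) (d m)) as [E|E]; [exact E|]. exfalso.
  unfold lam in H.
  destruct (lt_eq_lt_dec (first_occ d n) (first_occ d m)) as [[Hl|He]|Hl].
  - pose proof (count_lt (is_newb d) _ _ Hl (newb_fo d n)). lia.
  - apply E. rewrite <- (fo_val d n), <- (fo_val d m), He. reflexivity.
  - pose proof (count_lt (is_newb d) _ _ Hl (newb_fo d m)). lia.
Qed.

Lemma uniq (th : R) (a b a' b' : Z) : irrational th -> V th a b = V th a' b' -> a = a' /\ b = b'.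
Proof.
  intros Hirr E. unfold V in E.
  destruct (Z.eq_dec b b') as [->|Hne].
  - split; [|reflexivity]. apply eq_IZR. lra.
  - exfalso. apply (irr_ne th (a - a') (b' - b) Hirr); [lia|].
    rewrite !minus_IZR. lra.
Qed.

Lemma pick (w : nat -> nat) (P : nat -> Prop) :
  (forall t t', P t -> P t' -> w t = w t') -> exists a, forall t, P t -> w t = a.
Proof.
  intros H. destruct (classic (exists t, P t)) as [[t0 H0]|Hn].
  - exists (w t0). intros t Ht. apply H; auto.
  - exists O. intros t Ht. exfalso. apply Hn. exists t; auto.
Qed.

Theorem corollary6 (theta : R) (s : nat -> R) :
  1 < theta -> theta < 2 -> irrational theta ->
  is_S_enum theta s ->
  forall i L : nat,
    factor_palindrome (Lambda_word s) i L ->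
    factor_at_most_3_letters (Lambda_word s) i L.
Proof.
  intros Hth1 Hth2 Hirr [Hmono [Hin Hall]] i L Hpal.
  set (d := delta s).
  assert (Hlt : forall m n, (m < n)%nat -> s m < s n).
  { intros m n Hmn. induction Hmn as [|n Hmn IH].
    - apply Hmono.
    - specialize (Hmono n). lra. }
  assert (Hle : forall m n, (m <= n)%nat -> s m <= s n).
  { intros m n Hmn. destruct (Nat.eq_dec m n) as [->|Hne]; [lra|].
    left. apply Hlt. lia. }
  assert (HP1 : forall t, (t < L)%nat -> d (i + t)%nat = d (i + (L - 1 - t))%nat).
  { intros t Ht. apply lam_inj. apply Hpal. exact Ht. }
  assert (HP2 : forall t, (t <= L)%nat -> s (i + t)%nat - s i = s (i + L)%nat - s (i + (L - t))%nat).
  { induction t as [|t IH]; intros Ht.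
    - rewrite Nat.add_0_r, Nat.sub_0_r. ring.
    - specialize (IH ltac:(lia)). specialize (HP1 t ltac:(lia)).
      unfold d, delta in HP1.
      replace (S (i + (L - 1 - t))) with (i + (L - t))%nat in HP1 by lia.
      replace (i + (L - 1 - t))%nat with (i + (L - S t))%nat in HP1 by lia.
      replace (i + S t)%nat with (S (i + t)) by lia.
      lra. }
  assert (Hrep : forall n, {pq : nat * nat | s n = INR (fst pq) + INR (snd pq) * theta}).
  { intro n. apply constructive_indefinite_description.
    destruct (Hin n) as [a [b H]]. exists (a, b). exact H. }
  set (ci := fun n => fst (proj1_sig (Hrep n))).
  set (cj := fun n => snd (proj1_sig (Hrep n))).
  assert (Hci : forall n, s n = V theta (Z.of_nat (ci n)) (Z.of_nat (cj n))).
  { intro n. unfold V, ci, cj. rewrite <- !INR_IZR_INZ. exact (proj2_sig (Hrep n)). }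
  set (XI := fun t => Z.of_nat (ci (i + t)%nat)).
  set (XJ := fun t => Z.of_nat (cj (i + t)%nat)).
  assert (HX : forall t, s (i + t)%nat = V theta (XI t) (XJ t)).
  { intro t. apply Hci. }
  set (I := (XI O + XI L)%Z). set (J := (XJ O + XJ L)%Z).
  assert (HP3 : forall t, (t <= L)%nat -> XI (L - t)%nat = (I - XI t)%Z /\ XJ (L - t)%nat = (J - XJ t)%Z).
  { intros t Ht. apply (uniq theta _ _ _ _ Hirr).
    rewrite <- HX. specialize (HP2 t Ht).
    assert (E0 : s i = V theta (XI O) (XJ O)) by (rewrite <- HX; rewrite Nat.add_0_r; reflexivity).
    rewrite HX, HX, E0 in HP2. unfold I, J. vsimp. lra. }
  assert (HXI0 : forall t, (0 <= XI t)%Z) by (intro; unfold XI; lia).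
  assert (HXJ0 : forall t, (0 <= XJ t)%Z) by (intro; unfold XJ; lia).
  assert (HXb : forall t, (t <= L)%nat -> (XI t <= I)%Z /\ (XJ t <= J)%Z).
  { intros t Ht. destruct (HP3 t Ht) as [E1 E2].
    pose proof (HXI0 (L - t)%nat). pose proof (HXJ0 (L - t)%nat). lia. }
  assert (HE : forall t, (t < L)%nat -> forall zi zj, (0 <= zi)%Z -> (0 <= zj)%Z ->
     ~ (V theta (XI t) (XJ t) < V theta zi zj < V theta (XI (S t)) (XJ (S t)))).
  { intros t Ht zi zj Hzi Hzj [Ha Hb].
    destruct (Hall (V theta zi zj)) as [m Hm].
    { exists (Z.to_nat zi), (Z.to_nat zj). unfold V. rewrite !INR_IZR_INZ, !Z2Nat.id; auto. }
    rewrite <- HX, <- Hm in Ha. rewrite <- HX, <- Hm in Hb.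
    assert (H1 : (i + t < m)%nat).
    { destruct (le_lt_dec m (i + t)) as [h|h]; [|exact h]. specialize (Hle _ _ h). lra. }
    assert (H2 : (m < i + S t)%nat).
    { destruct (le_lt_dec (i + S t) m) as [h|h]; [|exact h]. specialize (Hle _ _ h). lra. }
    lia. }
  assert (HI0 : (0 <= I)%Z) by (unfold I; pose proof (HXI0 O); pose proof (HXI0 L); lia).
  assert (HJ0 : (0 <= J)%Z) by (unfold J; pose proof (HXJ0 O); pose proof (HXJ0 L); lia).
  destruct (sb theta I J Hirr ltac:(lra) HI0 HJ0)
    as (k & p & q & k' & Hdet & Hk & Hk' & Hp & Hq & HA & HB & HkI & HkJ & HC2).
  set (A := IZR q * theta - IZR k). set (B := IZR p - IZR k' * theta).
  assert (Hgap : forall t, (t < L)%nat -> d (i + t)%nat = A \/ d (i + t)%nat = B \/ d (i + t)%nat = A + B).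
  { intros t Ht. unfold d, delta.
    replace (S (i + t)) with (i + S t)%nat by lia.
    rewrite !HX.
    destruct (HXb t ltac:(lia)) as [Hb1 Hb2].
    destruct (HXb (S t) ltac:(lia)) as [Hb3 Hb4].
    apply (core theta k p q k' I J); try assumption; try (split; [first [apply HXI0|apply HXJ0] | assumption]).
    - rewrite <- !HX. apply Hlt. lia.
    - apply HE. exact Ht.
    - intros zi zj Hzi Hzj.
      destruct (HP3 (S t) ltac:(lia)) as [E1 E2].
      destruct (HP3 t ltac:(lia)) as [E3 E4].
      rewrite <- E1, <- E2, <- E3, <- E4.
      replace (L - t)%nat with (S (L - S t)) by lia.
      apply HE; auto. lia. }
  destruct (pick (fun t => Lambda_word s (i + t)%nat) (fun t => (t < L)%nat /\ d (i + t)%nat = A))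
    as [a Ha].
  { intros t t' [_ H] [_ H']. unfold Lambda_word. apply lam_eq. fold d. congruence. }
  destruct (pick (fun t => Lambda_word s (i + t)%nat) (fun t => (t < L)%nat /\ d (i + t)%nat = B))
    as [b Hb].
  { intros t t' [_ H] [_ H']. unfold Lambda_word. apply lam_eq. fold d. congruence. }
  destruct (pick (fun t => Lambda_word s (i + t)%nat) (fun t => (t < L)%nat /\ d (i + t)%nat = A + B))
    as [c Hc].
  { intros t t' [_ H] [_ H']. unfold Lambda_word. apply lam_eq. fold d. congruence. }
  exists a, b, c. intros t Ht.
  destruct (Hgap t Ht) as [H|[H|H]].
  - left. apply Ha. auto.
  - right; left. apply Hb. auto.
  - right; right. apply Hc. auto.
Qed.
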